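(* Let $W$ be a positive word such that either there exist positive words $A_1,\dots,A_{n-1}$ with $$W\doteq\sigma_1A_1\doteq\sigma_2A_2\doteq\cdots\doteq\sigma_{n-1}A_{n-1},$$ or there exist positive words $B_1,\dots,B_{n-1}$ with $$W\doteq B_1\sigma_1\doteq B_2\sigma_2\doteq\cdots\doteq B_{n-1}\sigma_{n-1}.$$ Then $W\doteq\Delta Z$ for some positive word $Z$.
   Context: Fix $n\ge 2$. The positive singular braid monoid $SB_n^+$ is the monoid with generators $\sigma_1,\dots,\sigma_{n-1},x_1,\dots,x_{n-1}$ and relations: $\sigma_i\sigma_j=\sigma_j\sigma_i$ and $x_ix_j=x_jx_i$ if $|i-j|>1$; $x_i\sigma_j=\sigma_jx_i$ if $|i-j|\ne 1$; $\sigma_i\sigma_{i+1}\sigma_i=\sigma_{i+1}\sigma_i\sigma_{i+1}$; $\sigma_i\sigma_{i+1}x_i=x_{i+1}\sigma_i\sigma_{i+1}$; $\sigma_{i+1}\sigma_ix_{i+1}=x_i\sigma_{i+1}\sigma_i$. A positive word is a word in the letters $\sigma_i,x_i$; $A\doteq B$ means they represent the same element of $SB_n^+$. Garside's fundamental word is $\Delta\equiv\sigma_1\cdots\sigma_{n-1}\,\sigma_1\cdots\sigma_{n-2}\cdots\sigma_1\sigma_2\,\sigma_1$. *)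

(* Defs.v *)
From mathcomp Require Import all_boot.
Set Implicit Arguments. Unset Strict Implicit. Unset Printing Implicit Defensive.

(* Letters of the positive singular braid monoid SB_n^+ :
   Sg i stands for sigma_i, X i for x_i (indices are natural numbers,
   meaningful for 1 <= i <= n-1). *)
Inductive letter : Type := Sg of nat | X of nat.

Definition letter_idx (l : letter) : nat := match l with Sg i => i | X i => i end.

Definition valid_idx (n i : nat) : bool := (1 <= i) && (i <= n.-1).

Definition positive_word (n : nat) (w : seq letter) : bool :=
  all (fun l => valid_idx n (letter_idx l)) w.

Definition ndist (i j : nat) : nat := (i - j) + (j - i).

Inductive sb_rel (n : nat) : seq letter -> seq letter -> Prop :=
| R_ss i j : valid_idx n i -> valid_idx n j -> 1 < ndist i j ->
    sb_rel n [:: Sg i; Sg j] [:: Sg j; Sg i]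
| R_xx i j : valid_idx n i -> valid_idx n j -> 1 < ndist i j ->
    sb_rel n [:: X i; X j] [:: X j; X i]
| R_xs i j : valid_idx n i -> valid_idx n j -> ndist i j != 1 ->
    sb_rel n [:: X i; Sg j] [:: Sg j; X i]
| R_braid i : valid_idx n i -> valid_idx n i.+1 ->
    sb_rel n [:: Sg i; Sg i.+1; Sg i] [:: Sg i.+1; Sg i; Sg i.+1]
| R_mix1 i : valid_idx n i -> valid_idx n i.+1 ->
    sb_rel n [:: Sg i; Sg i.+1; X i] [:: X i.+1; Sg i; Sg i.+1]
| R_mix2 i : valid_idx n i -> valid_idx n i.+1 ->
    sb_rel n [:: Sg i.+1; Sg i; X i.+1] [:: X i; Sg i.+1; Sg i].

Inductive sb_equiv (n : nat) : seq letter -> seq letter -> Prop :=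
| E_refl w : sb_equiv n w w
| E_rel p u v s : sb_rel n u v -> sb_equiv n (p ++ u ++ s) (p ++ v ++ s)
| E_sym w1 w2 : sb_equiv n w1 w2 -> sb_equiv n w2 w1
| E_trans w1 w2 w3 : sb_equiv n w1 w2 -> sb_equiv n w2 w3 -> sb_equiv n w1 w3.

(* Garside's fundamental word
   Delta = (s_1 ... s_{n-1}) (s_1 ... s_{n-2}) ... (s_1 s_2) (s_1). *)
Definition delta (n : nat) : seq letter :=
  flatten [seq [seq Sg j | j <- iota 1 k] | k <- rev (iota 1 n.-1)].
Example delta4 : delta 4 = [:: Sg 1; Sg 2; Sg 3; Sg 1; Sg 2; Sg 1].
Proof. by []. Qed.

(* Main.v *)
Require Import Defs.
From HB Require Import structures.
From mathcomp Require Import all_boot zify.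
Set Implicit Arguments. Unset Strict Implicit. Unset Printing Implicit Defensive.

Definition letter_eqb (a b : letter) : bool :=
  match a, b with
  | Sg i, Sg j => i == j
  | X i, X j => i == j
  | _, _ => false
  end.
Lemma letter_eqP : Equality.axiom letter_eqb.
Proof.
case=> [i|i] [j|j] /=; try (by constructor);
by apply: (iffP eqP) => [->|[]].
Qed.
HB.instance Definition _ := hasDecEq.Build letter letter_eqP.

Lemma eqv_sym n u v : sb_equiv n u v -> sb_equiv n v u.
Proof. exact: E_sym. Qed.
Lemma eqv_trans n u v w : sb_equiv n u v -> sb_equiv n v w -> sb_equiv n u w.
Proof. exact: E_trans. Qed.

Lemma eqv_ctx n p s u v : sb_equiv n u v -> sb_equiv n (p ++ u ++ s) (p ++ v ++ s).
Proof.
elim=> [w|p' u' v' s' r|w1 w2 _ IH|w1 w2 w3 _ IH1 _ IH2].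
- exact: E_refl.
- have E1 : p ++ (p' ++ u' ++ s') ++ s = (p ++ p') ++ u' ++ (s' ++ s) by rewrite !catA.
  have E2 : p ++ (p' ++ v' ++ s') ++ s = (p ++ p') ++ v' ++ (s' ++ s) by rewrite !catA.
  rewrite E1 E2; exact: E_rel.
- exact: E_sym.
- exact: E_trans IH2.
Qed.

Lemma eqv_catl n p u v : sb_equiv n u v -> sb_equiv n (p ++ u) (p ++ v).
Proof. by move=> /(eqv_ctx p [::]); rewrite !cats0. Qed.
Lemma eqv_catr n s u v : sb_equiv n u v -> sb_equiv n (u ++ s) (v ++ s).
Proof. by move=> /(eqv_ctx [::] s). Qed.
Lemma eqv_cat n u1 v1 u2 v2 : sb_equiv n u1 v1 -> sb_equiv n u2 v2 ->
  sb_equiv n (u1 ++ u2) (v1 ++ v2).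
Proof. move=> H1 H2; apply: eqv_trans (eqv_catr _ H1) (eqv_catl _ H2). Qed.
Lemma eqv_cons n a u v : sb_equiv n u v -> sb_equiv n (a :: u) (a :: v).
Proof. exact: (eqv_catl [:: a]). Qed.

Lemma rel_size n u v : sb_rel n u v -> size u = size v.
Proof. by case. Qed.
Lemma eqv_size n u v : sb_equiv n u v -> size u = size v.
Proof.
elim=> [w //|p u' v' s r|w1 w2 _ ->|w1 w2 w3 _ -> _ ->] //.
by rewrite !size_cat (rel_size r).
Qed.

Lemma rel_pos n u v : sb_rel n u v -> positive_word n u /\ positive_word n v.
Proof.
by case=> [i j hi hj _|i j hi hj _|i j hi hj _|i hi hj|i hi hj|i hi hj];
  rewrite /positive_word /= ?hi ?hj.
Qed.
Lemma pos_cat n u v : positive_word n (u ++ v) = positive_word n u && positive_word n v.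
Proof. exact: all_cat. Qed.
Lemma eqv_pos n u v : sb_equiv n u v -> positive_word n u = positive_word n v.
Proof.
elim=> [w //|p u' v' s r|w1 w2 _ ->|w1 w2 w3 _ -> _ ->] //.
by case: (rel_pos r) => Hu Hv; rewrite !pos_cat Hu Hv.
Qed.
Definition adj (i j : nat) : bool := (i.+1 == j) || (j.+1 == i).

Definition cf (a b : letter) : option (seq letter) :=
  match a, b with
  | Sg i, Sg j => if i == j then Some [::] else if adj i j then Some [:: Sg j; Sg i] else Some [:: Sg j]
  | X i, X j => if i == j then Some [::] else if adj i j then None else Some [:: X j]
  | X i, Sg j => if adj i j then Some [:: Sg j; Sg i] else Some [:: Sg j]
  | Sg i, X j => if adj i j then Some [:: Sg j; X i] else Some [:: X j]
  end.

Lemma cf_refl a : cf a a = Some [::].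
Proof. by case: a => i /=; rewrite eqxx. Qed.

Lemma ndist_gt1 i j : 1 < ndist i j -> (i == j) = false /\ adj i j = false.
Proof.
rewrite /ndist /adj => H; split; first by apply/eqP; lia.
by apply/negbTE/negP => /orP [] /eqP; lia.
Qed.
Lemma ndist_ne1 i j : ndist i j != 1 -> adj i j = false.
Proof. rewrite /ndist /adj => H; apply/negbTE/negP => /orP [] /eqP; lia. Qed.

Lemma rel_cf n a u b v : sb_rel n (a :: u) (b :: v) -> cf a b = Some u /\ cf b a = Some v.
Proof.
move Eu: (a :: u) => u0; move Ev: (b :: v) => v0 r.
case: r Eu Ev => [i j _ _ H|i j _ _ H|i j _ _ H|i _ _|i _ _|i _ _] [-> ->] [-> ->] /=.
- by case: (ndist_gt1 H) => -> ->; have [-> ->] : (j == i) = false /\ adj j i = false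
    by move: H; rewrite /ndist => H; apply: ndist_gt1; rewrite /ndist; lia.
- by case: (ndist_gt1 H) => -> ->; have [-> ->] : (j == i) = false /\ adj j i = false
    by move: H; rewrite /ndist => H; apply: ndist_gt1; rewrite /ndist; lia.
- rewrite (ndist_ne1 H); have -> // : adj j i = false.
  by apply: ndist_ne1; move: H; rewrite /ndist; lia.
- have -> : (i == i.+1) = false by apply/eqP; lia.
  have -> : (i.+1 == i) = false by apply/eqP; lia.
  by rewrite /adj !eqxx /= orbT.
- by rewrite /adj !eqxx /= orbT.
- by rewrite /adj !eqxx /= orbT.
Qed.

Inductive rres := RFail | ROk of seq letter & seq letter.

Fixpoint rv (fuel : nat) (u v : seq letter) : option rres :=
  match u, v with
  | [::], _ => Some (ROk v [::])
  | _, [::] => Some (ROk [::] u)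
  | a :: u0, b :: v0 =>
    match fuel with
    | 0 => None
    | fuel'.+1 =>
      match cf a b, cf b a with
      | Some p, Some q =>
        match rv fuel' u0 p with
        | Some (ROk u1 p1) =>
          match rv fuel' v0 (q ++ p1) with
          | Some (ROk v1 w) => Some (ROk (u1 ++ w) v1)
          | r => r
          end
        | r => r
        end
      | _, _ => Some RFail
      end
    end
  end.

Definition concl n a A b B := exists p q C, cf a b = Some p /\ cf b a = Some q /\
  sb_equiv n A (p ++ C) /\ sb_equiv n B (q ++ C).
Definition KL n d := forall a A b B, size A = d -> positive_word n (a :: A) ->
  sb_equiv n (a :: A) (b :: B) -> concl n a A b B.

Definition rres_ok n (res : rres) R C :=
  match res with
  | RFail => False
  | ROk u' v' => exists D, sb_equiv n R (u' ++ D) /\ sb_equiv n C (v' ++ D)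
  end.

Lemma rv_sound n d (IH : forall d', d' < d -> KL n d') fuel : forall u v res,
  rv fuel u v = Some res -> forall R C, size (u ++ R) <= d ->
  positive_word n (u ++ R) -> sb_equiv n (u ++ R) (v ++ C) -> rres_ok n res R C.
Proof.
elim: fuel => [|fuel IHf] [|a u0] [|b v0] res //=;
  try by move=> [<-] R C _ _ H; first [exists C; split; [exact: H|exact: E_refl]
                                    |exists R; split; [exact: E_refl|exact: eqv_sym]].
move=> Hres R C Hs Hp He.
have Hd : size (u0 ++ R) < d by [].
have [p [q [D1 [Hab [Hba [E1 E2]]]]]] := IH _ Hd a (u0 ++ R) b (v0 ++ C) erefl Hp He.
move: Hres; rewrite Hab Hba.
have Hp0 : positive_word n (u0 ++ R) by move: Hp => /andP [].
case E3: (rv fuel u0 p) => [[|u1 p1]|] //.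
  by move=> [<-]; have := IHf _ _ _ E3 R D1 (ltnW Hd) Hp0 E1.
have [D2 [F1 F2]] := IHf _ _ _ E3 R D1 (ltnW Hd) Hp0 E1.
have Hsz : size (u0 ++ R) = size (v0 ++ C) by have := eqv_size He => /= [[]].
have Hp1 : positive_word n (v0 ++ C).
  have : positive_word n (b :: v0 ++ C) by rewrite -(eqv_pos He).
  by move=> /andP [].
have G : sb_equiv n (v0 ++ C) ((q ++ p1) ++ D2).
  by rewrite -catA; apply: eqv_trans E2 (eqv_catl _ F2).
have Hs2 : size (v0 ++ C) <= d by rewrite -Hsz ltnW.
case E4: (rv fuel v0 (q ++ p1)) => [[|v1 w]|] //.
  by move=> [<-]; have := IHf _ _ _ E4 C D2 Hs2 Hp1 G.
move=> [<-] /=.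
have [D3 [G1 G2]] := IHf _ _ _ E4 C D2 Hs2 Hp1 G.
exists D3; split; last exact: G1.
by rewrite -catA; apply: eqv_trans F1 (eqv_catl _ G2).
Qed.
Definition rel2 n (a b : letter) : bool :=
  match a, b with
  | Sg i, Sg j => valid_idx n i && valid_idx n j && (1 < ndist i j)
  | X i, X j => valid_idx n i && valid_idx n j && (1 < ndist i j)
  | X i, Sg j => valid_idx n i && valid_idx n j && (ndist i j != 1)
  | Sg j, X i => valid_idx n i && valid_idx n j && (ndist i j != 1)
  end.

Definition rel3 n (w : seq letter) : option (seq letter) :=
  match w with
  | [:: Sg i; Sg j; Sg k] =>
      if (i == k) && adj i j && valid_idx n i && valid_idx n j
      then Some [:: Sg j; Sg i; Sg j] else None
  | [:: Sg i; Sg j; X k] =>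
      if (k == i) && adj i j && valid_idx n i && valid_idx n j
      then Some [:: X j; Sg i; Sg j] else None
  | [:: X k; Sg i; Sg j] =>
      if (k == j) && adj i j && valid_idx n i && valid_idx n j
      then Some [:: Sg i; Sg j; X i] else None
  | _ => None
  end.

Lemma rel_eqv n u v : sb_rel n u v -> sb_equiv n u v.
Proof. by move=> r; have := E_rel [::] [::] r; rewrite /= !cats0. Qed.

Lemma rel2_sound n a b : rel2 n a b -> sb_equiv n [:: a; b] [:: b; a].
Proof.
case: a b => i [] j /= /andP [] /andP [] hi hj H.
- by apply: rel_eqv; apply: R_ss.
- by apply: eqv_sym; apply: rel_eqv; apply: R_xs.
- by apply: rel_eqv; apply: R_xs.
- by apply: rel_eqv; apply: R_xx.
Qed.

Lemma rel3_sound n w v : rel3 n w = Some v -> sb_equiv n w v.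
Proof.
case: w => [|[] i [|[] j [|[] k [|]]]] //=;
  case: ifP => // /andP [] /andP [] /andP [] /eqP E /orP [] /eqP A hi hj [<-];
  subst => //.
- by apply: rel_eqv; apply: R_braid.
- by apply: eqv_sym; apply: rel_eqv; apply: R_braid.
- by apply: rel_eqv; apply: R_mix1.
- by apply: rel_eqv; apply: R_mix2.
- by apply: eqv_sym; apply: rel_eqv; apply: R_mix1.
- by apply: eqv_sym; apply: rel_eqv; apply: R_mix2.
Qed.

Definition head_rw n (w : seq letter) : seq (seq letter) :=
  (match w with a :: b :: r => if rel2 n a b then [:: b :: a :: r] else [::] | _ => [::] end)
  ++ (match w with a :: b :: c :: r =>
        if rel3 n [:: a; b; c] is Some v then [:: v ++ r] else [::] | _ => [::] end).

Fixpoint nbrs n (w : seq letter) : seq (seq letter) :=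
  head_rw n w ++ (match w with a :: w' => map (cons a) (nbrs n w') | [::] => [::] end).

Lemma head_rw_sound n w w' : w' \in head_rw n w -> sb_equiv n w w'.
Proof.
rewrite mem_cat => /orP [].
  case: w => [|a [|b r]] //; case: ifP => // H; rewrite inE => /eqP ->.
  by have := eqv_catr r (rel2_sound H).
case: w => [|a [|b [|c r]]] //; case E: (rel3 _ _) => [v|] //; rewrite inE => /eqP ->.
by have := eqv_catr r (rel3_sound E).
Qed.

Lemma nbrs_sound n w w' : w' \in nbrs n w -> sb_equiv n w w'.
Proof.
elim: w w' => [|a w IH] w' //.
rewrite [nbrs _ _]/= mem_cat => /orP [].
- exact: head_rw_sound.
- by move=> /mapP [x /IH H ->]; apply: eqv_cons.
Qed.

Fixpoint reach n k (S : seq (seq letter)) : seq (seq letter) :=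
  match k with
  | 0 => S
  | k'.+1 => reach n k' (undup (S ++ flatten (map (nbrs n) S)))
  end.

Lemma reach_sound n k : forall w0 S, (forall w, w \in S -> sb_equiv n w0 w) ->
  forall w, w \in reach n k S -> sb_equiv n w0 w.
Proof.
elim: k => [|k IH] w0 S HS //=.
apply: IH => w; rewrite mem_undup mem_cat => /orP [/HS //|].
move=> /flattenP [ws /mapP [x Hx ->] Hw].
exact: eqv_trans (HS _ Hx) (nbrs_sound Hw).
Qed.

Definition KR := 6.
Definition FUEL := 10.

Definition find_t n w1 u w2 v : bool :=
  has (fun w => (take (size u) w == u) && ((v ++ drop (size u) w) \in reach n KR [:: w2]))
      (reach n KR [:: w1]).

Lemma reach1 n w1 w : w \in reach n KR [:: w1] -> sb_equiv n w1 w.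
Proof.
apply: reach_sound => w'; rewrite inE => /eqP ->; exact: E_refl.
Qed.

Lemma find_t_sound n w1 u w2 v : find_t n w1 u w2 v ->
  exists t, sb_equiv n w1 (u ++ t) /\ sb_equiv n w2 (v ++ t).
Proof.
move=> /hasP [w /reach1 H1 /andP [/eqP Ht /reach1 H2]].
exists (drop (size u) w); split => //.
by rewrite -{1}Ht cat_take_drop.
Qed.

Definition cube_ok n a b c : bool :=
  match cf a c, cf c a, cf c b, cf b c with
  | Some p, Some q, Some r, Some s =>
    match rv FUEL q r with
    | Some RFail => true
    | Some (ROk q' r') =>
      match cf a b, cf b a with
      | Some u, Some v => find_t n (p ++ q') u (s ++ r') v
      | _, _ => false
      end
    | None => false
    end
  | _, _, _, _ => true
  end.

Definition L5 : seq letter := [seq Sg i | i <- iota 1 5] ++ [seq X i | i <- iota 1 5].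

Lemma all_cube : all (fun a => all (fun b => all (fun c => cube_ok 6 a b c) L5) L5) L5.
Proof. vm_compute. reflexivity. Qed.
Definition lmap (psi : nat -> nat) (l : letter) : letter :=
  match l with Sg i => Sg (psi i) | X i => X (psi i) end.
Definition subw (S : seq nat) (w : seq letter) : bool :=
  all (fun l => letter_idx l \in S) w.
Definition Good (psi : nat -> nat) (S : seq nat) : Prop :=
  forall x y, x \in S -> y \in S ->
    (psi x == psi y) = (x == y) /\ ((psi x).+1 == psi y) = (x.+1 == y).

Lemma subw_cat S u v : subw S (u ++ v) = subw S u && subw S v.
Proof. exact: all_cat. Qed.

Lemma adj_map psi S i j : Good psi S -> i \in S -> j \in S -> adj (psi i) (psi j) = adj i j.
Proof.
move=> G hi hj; rewrite /adj; case: (G _ _ hi hj) => _ ->; by case: (G _ _ hj hi) => _ ->.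
Qed.

Lemma cf_map psi S a b : Good psi S -> letter_idx a \in S -> letter_idx b \in S ->
  cf (lmap psi a) (lmap psi b) = omap (map (lmap psi)) (cf a b).
Proof.
move=> G; case: a => i; case: b => j /= hi hj; rewrite (adj_map G hi hj);
  try (case: (G _ _ hi hj) => -> _); by repeat case: ifP.
Qed.

Lemma cf_sub S a b p : cf a b = Some p -> letter_idx a \in S -> letter_idx b \in S -> subw S p.
Proof.
case: a => i; case: b => j /= ; repeat case: ifP => _; move=> // [<-] ha hb; by rewrite /subw /= ?ha ?hb.
Qed.

Definition rmap psi (r : rres) : rres :=
  match r with RFail => RFail | ROk u v => ROk (map (lmap psi) u) (map (lmap psi) v) end.

Lemma rv_sub S fuel : forall u v u' v', rv fuel u v = Some (ROk u' v') ->
  subw S u -> subw S v -> subw S u' && subw S v'.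
Proof.
elim: fuel => [|fuel IH] [|a u0] [|b v0] u' v' //=; try by move=> [<- <-] ha hb; apply/andP; split.
move=> H /andP [ha hu] /andP [hb hv]; move: H.
case E1: (cf a b) => [p|] //; case E2: (cf b a) => [q|] //.
case E3: (rv fuel u0 p) => [[|u1 p1]|] //.
case E4: (rv fuel v0 (q ++ p1)) => [[|v1 w]|] //= [<- <-].
have /andP [h1 h2] := IH _ _ _ _ E3 hu (cf_sub E1 ha hb).
have hq : subw S (q ++ p1) by rewrite subw_cat (cf_sub E2 hb ha).
have /andP [h3 h4] := IH _ _ _ _ E4 hv hq.
by rewrite subw_cat h1 h4 h3.
Qed.

Lemma rv_map psi S fuel : Good psi S -> forall u v, subw S u -> subw S v ->
  rv fuel (map (lmap psi) u) (map (lmap psi) v) = omap (rmap psi) (rv fuel u v).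
Proof.
move=> G; elim: fuel => [|fuel IH] [|a u0] [|b v0] //= /andP [ha hu] /andP [hb hv].
have ha' : letter_idx a \in S by [].
rewrite (cf_map G ha hb) (cf_map G hb ha).
case E1: (cf a b) => [p|] //; case E2: (cf b a) => [q|] //=.
have sp := cf_sub E1 ha hb; have sq := cf_sub E2 hb ha.
rewrite (IH _ _ hu sp).
case E3: (rv fuel u0 p) => [[|u1 p1]|] //=.
have /andP [s1 s2] := rv_sub E3 hu sp.
have hq : subw S (q ++ p1) by rewrite subw_cat sq s2.
rewrite -map_cat (IH _ _ hv hq).
case E4: (rv fuel v0 (q ++ p1)) => [[|v1 w]|] //=.
by rewrite map_cat.
Qed.
Lemma ndist_gt1_iff x y : (1 < ndist x y) = [&& x != y, x.+1 != y & y.+1 != x].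
Proof.
rewrite /ndist; apply/idP/idP => [H|/and3P [H1 H2 H3]].
  by apply/and3P; split; apply/eqP; lia.
by move: H1 H2 H3 => /eqP H1 /eqP H2 /eqP H3; lia.
Qed.
Lemma ndist_ne1_iff x y : (ndist x y != 1) = (x.+1 != y) && (y.+1 != x).
Proof.
rewrite /ndist; apply/idP/idP => [/eqP H|/andP [/eqP H2 /eqP H3]].
  by apply/andP; split; apply/eqP; lia.
by apply/eqP; lia.
Qed.

Lemma rel_subw S n u v : sb_rel n u v -> subw S u = subw S v.
Proof.
case=> [i j _ _ _|i j _ _ _|i j _ _ _|i _ _|i _ _|i _ _]; rewrite /subw /=;
  first [by case: (i \in S); case: (j \in S) | by case: (i \in S); case: (i.+1 \in S)].
Qed.

Lemma rel_map n n' psi S u v : Good psi S -> (forall x, x \in S -> valid_idx n (psi x)) ->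
  subw S u -> sb_rel n' u v -> sb_rel n (map (lmap psi) u) (map (lmap psi) v).
Proof.
move=> G V Hs r; case: r Hs => [i j _ _ H|i j _ _ H|i j _ _ H|i _ _|i _ _|i _ _];
  rewrite /subw /= ?andbT => Hs.
- case/andP: Hs => hi hj; apply: R_ss; rewrite ?V //.
  move: H; rewrite !ndist_gt1_iff.
  by case: (G _ _ hi hj) => -> ->; case: (G _ _ hj hi) => _ ->.
- case/andP: Hs => hi hj; apply: R_xx; rewrite ?V //.
  move: H; rewrite !ndist_gt1_iff.
  by case: (G _ _ hi hj) => -> ->; case: (G _ _ hj hi) => _ ->.
- case/andP: Hs => hi hj; apply: R_xs; rewrite ?V //.
  move: H; rewrite !ndist_ne1_iff.
  by case: (G _ _ hi hj) => _ ->; case: (G _ _ hj hi) => _ ->.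
all: have hi : i \in S by case/and3P: Hs.
all: have hj : i.+1 \in S by case/and3P: Hs.
all: have E : psi i.+1 = (psi i).+1 by case: (G _ _ hi hj) => _; rewrite eqxx => /eqP.
all: rewrite E.
- by apply: R_braid; rewrite -?E V.
- by apply: R_mix1; rewrite -?E V.
- by apply: R_mix2; rewrite -?E V.
Qed.

Lemma eqv_map n n' psi S w1 w2 : Good psi S -> (forall x, x \in S -> valid_idx n (psi x)) ->
  sb_equiv n' w1 w2 -> subw S w1 = subw S w2 /\
  (subw S w1 -> sb_equiv n (map (lmap psi) w1) (map (lmap psi) w2)).
Proof.
move=> G V; elim=> [w|p u v s r|u v _ [IH1 IH2]|u v w _ [IH1 IH2] _ [IH3 IH4]].
- by split => // _; apply: E_refl.
- rewrite !subw_cat (rel_subw S r); split => // /and3P [h1 h2 h3].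
  have hu : subw S u by rewrite (rel_subw S r).
  rewrite !map_cat; exact: (E_rel _ _ (rel_map G V hu r)).
- split => // H; apply: E_sym; apply: IH2; by rewrite IH1.
- split; first by rewrite IH1.
  move=> H; apply: E_trans (IH2 H) (IH4 _); by rewrite -IH1.
Qed.
Definition gp (a b : nat) : nat := if a == b then 0 else if a.+1 == b then 1 else 2.
Definition rhos (t1 t2 t3 x : nat) : nat :=
  1 + (if t2 <= x then gp t1 t2 else 0) + (if t3 <= x then gp t2 t3 else 0).

Lemma rhos_prop t1 t2 t3 x y : t1 <= t2 <= t3 ->
  x \in [:: t1; t2; t3] -> y \in [:: t1; t2; t3] ->
  (rhos t1 t2 t3 x == rhos t1 t2 t3 y) = (x == y) /\
  ((rhos t1 t2 t3 x).+1 == rhos t1 t2 t3 y) = (x.+1 == y) /\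
  1 <= rhos t1 t2 t3 x <= 5.
Proof.
move=> /andP [h1 h2].
rewrite !inE /rhos /gp => /or3P [] /eqP Hx /or3P [] /eqP Hy; subst x y;
  repeat case: ifP => /= ; move=> *;
  (split; last split); (try apply/eqP/eqP); lia.
Qed.
Definition rho3 i j k x : nat :=
  match sort leq [:: i; j; k] with [:: t1; t2; t3] => rhos t1 t2 t3 x | _ => x end.

Lemma rho3_prop i j k x y : x \in [:: i; j; k] -> y \in [:: i; j; k] ->
  (rho3 i j k x == rho3 i j k y) = (x == y) /\
  ((rho3 i j k x).+1 == rho3 i j k y) = (x.+1 == y) /\
  1 <= rho3 i j k x <= 5.
Proof.
have Hp := mem_sort leq [:: i; j; k].
have Hs := sort_sorted leq_total [:: i; j; k].
have Hsz := size_sort leq [:: i; j; k].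
rewrite /rho3; move: Hp Hs Hsz.
case: (sort leq _) => [|t1 [|t2 [|t3 [|]]]] //= Hp /andP [h1 /andP [h2 _]] _ Hx Hy.
apply: rhos_prop; first by rewrite h1 h2.
  by rewrite Hp.
by rewrite Hp.
Qed.

Definition psi3 i j k (x : nat) : nat :=
  if x == rho3 i j k i then i else if x == rho3 i j k j then j else k.

Lemma psi3_rho i j k u : u \in [:: i; j; k] -> psi3 i j k (rho3 i j k u) = u.
Proof.
have mi : i \in [:: i; j; k] by rewrite !inE eqxx.
have mj : j \in [:: i; j; k] by rewrite !inE eqxx orbT.
have mk : k \in [:: i; j; k] by rewrite !inE eqxx !orbT.
move=> Hu; rewrite /psi3.
case: ifP => [/eqP E|Ni].
  by have [H _] := rho3_prop Hu mi; move: H; rewrite E eqxx => /esym/eqP ->.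
case: ifP => [/eqP E|Nj].
  by have [H _] := rho3_prop Hu mj; move: H; rewrite E eqxx => /esym/eqP ->.
move: Hu; rewrite !inE => /or3P [] /eqP E //; subst u.
- by rewrite eqxx in Ni.
- by rewrite eqxx in Nj.
Qed.

Lemma Good_psi3 i j k : Good (psi3 i j k) (map (rho3 i j k) [:: i; j; k]).
Proof.
move=> x y /mapP [u Hu ->] /mapP [v Hv ->].
rewrite !psi3_rho //; have [-> [-> _]] := rho3_prop Hu Hv; by [].
Qed.
Lemma inL5 l : 1 <= letter_idx l <= 5 -> l \in L5.
Proof.
case: l => m /= H; rewrite mem_cat; apply/orP; [left|right]; apply/map_f;
  rewrite mem_iota; lia.
Qed.

Lemma lmap_idx psi l : letter_idx (lmap psi l) = psi (letter_idx l).
Proof. by case: l. Qed.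

Lemma lmap_comp f g l : lmap f (lmap g l) = lmap (fun x => f (g x)) l.
Proof. by case: l. Qed.

Lemma lmap_id_in f l : f (letter_idx l) = letter_idx l -> lmap f l = l.
Proof. by case: l => m /= ->. Qed.

Lemma pos_cons n a w : positive_word n (a :: w) = valid_idx n (letter_idx a) && positive_word n w.
Proof. by []. Qed.

Lemma cube_step n d (IH : forall d', d' < d -> KL n d') a A c U b B :
  size U = d -> valid_idx n (letter_idx a) -> valid_idx n (letter_idx b) ->
  positive_word n (c :: U) ->
  concl n a A c U -> concl n c U b B -> concl n a A b B.
Proof.
move=> HU va vb Hc [p [q [C1 [Hac [Hca [EA EU1]]]]]] [r [s [C2 [Hcb [Hbc [EU2 EB]]]]]].
move: (Hc); rewrite pos_cons => /andP [vc pU].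
pose i := letter_idx a; pose j := letter_idx b; pose k := letter_idx c.
pose T := [:: i; j; k].
have mi : i \in T by rewrite !inE eqxx.
have mj : j \in T by rewrite !inE eqxx orbT.
have mk : k \in T by rewrite !inE eqxx !orbT.
pose psi := psi3 i j k; pose rh := rho3 i j k; pose S' := map rh T.
have G : Good psi S' := @Good_psi3 i j k.
have V : forall x, x \in S' -> valid_idx n (psi x).
  move=> x /mapP [u Hu ->]; rewrite /psi psi3_rho //.
  by move: Hu; rewrite !inE => /or3P [] /eqP ->.
have back : forall l, letter_idx l \in T -> lmap psi (lmap rh l) = l.
  by move=> l Hl; rewrite lmap_comp; apply: lmap_id_in; rewrite /psi psi3_rho.
have inS : forall l, letter_idx l \in T -> letter_idx (lmap rh l) \in S'.
  by move=> l Hl; rewrite lmap_idx; apply: map_f.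
have inL : forall l, letter_idx l \in T -> lmap rh l \in L5.
  by move=> l Hl; apply: inL5; rewrite lmap_idx; have [_ [_ ->]] := rho3_prop Hl Hl.
pose a' := lmap rh a; pose b' := lmap rh b; pose c' := lmap rh c.
have Ea : lmap psi a' = a by apply: back.
have Eb : lmap psi b' = b by apply: back.
have Ec : lmap psi c' = c by apply: back.
have ia : letter_idx a' \in S' by apply: inS.
have ib : letter_idx b' \in S' by apply: inS.
have ic : letter_idx c' \in S' by apply: inS.
have Hok : cube_ok 6 a' b' c'.
  have H1 := allP all_cube a' (inL _ mi).
  have H2 := allP H1 b' (inL _ mj).
  exact: (allP H2 c' (inL _ mk)).
have Fac := cf_map G ia ic; rewrite Ea Ec Hac in Fac.
have Fca := cf_map G ic ia; rewrite Ea Ec Hca in Fca.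
have Fcb := cf_map G ic ib; rewrite Eb Ec Hcb in Fcb.
have Fbc := cf_map G ib ic; rewrite Eb Ec Hbc in Fbc.
have Fab := cf_map G ia ib; rewrite Ea Eb in Fab.
have Fba := cf_map G ib ia; rewrite Ea Eb in Fba.
move: Hok; rewrite /cube_ok.
case E1: (cf a' c') Fac => [p0|] // [Ep].
case E2: (cf c' a') Fca => [q0|] // [Eq].
case E3: (cf c' b') Fcb => [r0|] // [Er].
case E4: (cf b' c') Fbc => [s0|] // [Es].
subst p q r s.
have sp0 := cf_sub E1 ia ic; have sq0 := cf_sub E2 ic ia.
have sr0 := cf_sub E3 ic ib; have ss0 := cf_sub E4 ib ic.
have Rm := rv_map FUEL G sq0 sr0.
have Hsz : size (map (lmap psi) q0 ++ C1) <= d by rewrite -(eqv_size EU1) HU.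
have Hps : positive_word n (map (lmap psi) q0 ++ C1) by rewrite -(eqv_pos EU1).
have Heq : sb_equiv n (map (lmap psi) q0 ++ C1) (map (lmap psi) r0 ++ C2).
  exact: eqv_trans (eqv_sym EU1) EU2.
case E5: (rv FUEL q0 r0) Rm => [[|q0' r0']|] // Rm.
  by move=> _; have := rv_sound IH Rm Hsz Hps Heq.
have [D [D1 D2]] := rv_sound IH Rm Hsz Hps Heq.
case E6: (cf a' b') Fab => [u0|] // Fab.
case E7: (cf b' a') Fba => [v0|] // Fba Hft.
have [t0 [T1 T2]] := @find_t_sound 6 (p0 ++ q0') u0 (s0 ++ r0') v0 Hft.
have /andP [sq0' sr0'] := rv_sub E5 sq0 sr0.
have [_ M1] := eqv_map G V T1.
have [_ M2] := eqv_map G V T2.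
have W1 : subw S' (p0 ++ q0') by rewrite subw_cat sp0 sq0'.
have W2 : subw S' (s0 ++ r0') by rewrite subw_cat ss0 sr0'.
have {M1}M1 := M1 W1.
have {M2}M2 := M2 W2.
exists (map (lmap psi) u0), (map (lmap psi) v0), (map (lmap psi) t0 ++ D).
split; first by rewrite Fab.
split; first by rewrite Fba.
split.
- apply: eqv_trans EA _; apply: eqv_trans (eqv_catl _ D1) _.
  rewrite catA -map_cat; apply: eqv_trans (eqv_catr _ M1) _.
  rewrite map_cat -catA; exact: E_refl.
- apply: eqv_trans EB _; apply: eqv_trans (eqv_catl _ D2) _.
  rewrite catA -map_cat; apply: eqv_trans (eqv_catr _ M2) _.
  rewrite map_cat -catA; exact: E_refl.
Qed.
Definition PP n d (w1 w2 : seq letter) := forall a A b B, w1 = a :: A -> w2 = b :: B ->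
  size A = d -> positive_word n w1 -> concl n a A b B.

Lemma concl_refl n a A B : sb_equiv n A B -> concl n a A a B.
Proof.
move=> H; exists [::], [::], B; rewrite cf_refl; do 2 split => //; split => //; exact: E_refl.
Qed.

Lemma PP_rel n d p u v s : sb_rel n u v -> PP n d (p ++ u ++ s) (p ++ v ++ s) /\ PP n d (p ++ v ++ s) (p ++ u ++ s).
Proof.
move=> r; case: p => [|x p].
- case: u v r => [|a0 u'] [|b0 v'] r; try by inversion r.
  have [H1 H2] := rel_cf r.
  split => a A b B /= [<- <-] [<- <-] _ _.
  + by exists u', v', s; do 2 split => //; split; exact: E_refl.
  + by exists v', u', s; do 2 split => //; split; exact: E_refl.
- split => a A b B /= [<- <-] [<- <-] _ _; apply: concl_refl.
  + exact: E_rel.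
  + exact/E_sym/E_rel.
Qed.

Lemma KL_all n d : KL n d.
Proof.
elim/ltn_ind: d => d IH.
suff main : forall w1 w2, sb_equiv n w1 w2 -> PP n d w1 w2 /\ PP n d w2 w1.
  move=> a A b B HA Hp He; exact: (main _ _ He).1 a A b B erefl erefl HA Hp.
move=> w1 w2; elim=> [w|p u v s r|u v _ [IH1 IH2]|w1' w2' w3' H12 [P12 P21] H23 [P23 P32]].
- by split => a A b B -> [-> ->] _ _; apply: concl_refl; apply: E_refl.
- exact: PP_rel.
- by split.
have H13 : sb_equiv n w1' w3' := E_trans H12 H23.
split.
- move=> a A b B E1 E3 HA Hp.
  have Hs2 : size w2' = d.+1 by rewrite -(eqv_size H12) E1 /= HA.
  case: w2' H12 H23 P12 P21 P23 P32 Hs2 => [//|c U] H12 H23 P12 P21 P23 P32 [HU].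
  have Hp2 : positive_word n (c :: U) by rewrite -(eqv_pos H12).
  have Hp3 : positive_word n w3' by rewrite -(eqv_pos H13).
  apply: (cube_step IH HU _ _ Hp2 (P12 _ _ _ _ E1 erefl HA Hp) (P23 _ _ _ _ erefl E3 HU Hp2)).
  + by move: Hp; rewrite E1 pos_cons => /andP [].
  + by move: Hp3; rewrite E3 pos_cons => /andP [].
- move=> b B a A E3 E1 HB Hp.
  have Hs2 : size w2' = d.+1 by rewrite (eqv_size H23) E3 /= HB.
  case: w2' H12 H23 P12 P21 P23 P32 Hs2 => [//|c U] H12 H23 P12 P21 P23 P32 [HU].
  have Hp2 : positive_word n (c :: U) by rewrite (eqv_pos H23).
  have Hp1 : positive_word n w1' by rewrite (eqv_pos H13).
  apply: (cube_step IH HU _ _ Hp2 (P32 _ _ _ _ E3 erefl HB Hp) (P21 _ _ _ _ erefl E1 HU Hp2)).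
  + by move: Hp; rewrite E3 pos_cons => /andP [].
  + by move: Hp1; rewrite E1 pos_cons => /andP [].
Qed.
Definition Div n u v u' v' := forall R C, positive_word n (u ++ R) ->
  sb_equiv n (u ++ R) (v ++ C) -> exists D, sb_equiv n R (u' ++ D) /\ sb_equiv n C (v' ++ D).

Lemma Div_letter n a b p q : cf a b = Some p -> cf b a = Some q -> Div n [:: a] [:: b] p q.
Proof.
move=> Hp Hq R C HP HE.
have [p' [q' [D [H1 [H2 [H3 H4]]]]]] := KL_all erefl HP HE.
rewrite Hp in H1; rewrite Hq in H2; case: H1 => E1; case: H2 => E2; subst.
by exists D.
Qed.

Lemma Div_cat_l n u1 u2 v u1' v1 u2' w : Div n u1 v u1' v1 -> Div n u2 u1' u2' w ->
  Div n (u1 ++ u2) v u2' (v1 ++ w).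
Proof.
move=> H1 H2 R C HP HE; rewrite -catA in HP HE.
have [D [D1 D2]] := H1 _ _ HP HE.
have HP2 : positive_word n (u2 ++ R) by move: HP; rewrite pos_cat => /andP [].
have [E [E1 E2]] := H2 _ _ HP2 D1.
exists E; split => //; rewrite -catA; exact: eqv_trans D2 (eqv_catl _ E2).
Qed.

Lemma Div_cat_r n u v1 v2 u1 v1' w v2' : Div n u v1 u1 v1' -> Div n v1' v2 w v2' ->
  Div n u (v1 ++ v2) (u1 ++ w) v2'.
Proof.
move=> H1 H2 R C HP HE; rewrite -catA in HE.
have [D [D1 D2]] := H1 _ _ HP HE.
have HP2 : positive_word n (v1' ++ D).
  have : positive_word n (v1 ++ v2 ++ C) by rewrite -(eqv_pos HE).
  by rewrite pos_cat (eqv_pos D2) => /andP [].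
have [E [E1 E2]] := H2 _ _ HP2 (eqv_sym D2).
exists E; split => //; rewrite -catA; exact: eqv_trans D1 (eqv_catl _ E1).
Qed.

Lemma Div_far n u l : (forall x, x \in u -> cf x l = Some [:: l] /\ cf l x = Some [:: x]) ->
  Div n u [:: l] [:: l] u.
Proof.
elim: u => [|x u IH] H.
  by move=> R C _ HE; exists C; split => //; exact: E_refl.
have [h1 h2] := H x (mem_head _ _).
have := Div_cat_l (@Div_letter n _ _ _ _ h1 h2) (IH (fun y hy => H y (mem_behead (s:=x :: u) hy))).
by [].
Qed.

Definition rw m : seq letter := [seq Sg j | j <- iota 1 m].
Definition sw m : seq letter := [seq Sg j | j <- rev (iota 1 m)].
Definition allS m (w : seq letter) : bool :=
  all (fun l => if l is Sg j then (1 <= j <= m) else false) w.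

Lemma iotaS1 m : iota 1 m.+1 = iota 1 m ++ [:: m.+1].
Proof. by rewrite -[m.+1]addn1 iotaD add1n addn1. Qed.

Lemma rwS m : rw m.+1 = rw m ++ [:: Sg m.+1].
Proof. by rewrite /rw iotaS1 map_cat. Qed.
Lemma swS m : sw m.+1 = Sg m.+1 :: sw m.
Proof. by rewrite /sw iotaS1 rev_cat. Qed.
Lemma deltaS m : delta m.+2 = rw m.+1 ++ delta m.+1.
Proof.
rewrite /delta; change (m.+2).-1 with m.+1; change (m.+1).-1 with m.
by rewrite iotaS1 rev_cat map_cat flatten_cat /= cats0.
Qed.

Lemma allS_cat m u v : allS m (u ++ v) = allS m u && allS m v.
Proof. exact: all_cat. Qed.
Lemma allS_rw m : allS m (rw m).
Proof. by apply/allP => l /mapP [j]; rewrite mem_iota => H ->; lia. Qed.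
Lemma allS_sw m : allS m (sw m).
Proof. by apply/allP => l /mapP [j]; rewrite mem_rev mem_iota => H ->; lia. Qed.
Lemma allS_mono m m' w : m <= m' -> allS m w -> allS m' w.
Proof.
move=> H /allP A; apply/allP => l /A; case: l => // j; lia.
Qed.
Lemma allS_delta m : allS m (delta m.+1).
Proof.
elim: m => [//|m IH]; rewrite deltaS allS_cat allS_rw /=.
exact: allS_mono IH.
Qed.

Lemma far_cf m w k : allS m w -> m.+1 < k ->
  forall x, x \in w -> cf x (Sg k) = Some [:: Sg k] /\ cf (Sg k) x = Some [:: x].
Proof.
move=> /allP A Hk x /A; case: x => // j Hj /=.
have -> : (j == k) = false by apply/eqP; lia.
have -> : (k == j) = false by apply/eqP; lia.
have -> : adj j k = false by rewrite /adj; apply/negbTE/negP => /orP [] /eqP; lia.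
by have -> : adj k j = false by rewrite /adj; apply/negbTE/negP => /orP [] /eqP; lia.
Qed.

Lemma Div_delta n k : exists v, Div n (delta k.+1) [:: Sg k.+1] (sw k.+1) v.
Proof.
elim: k => [|k [v IH]].
  exists [::] => R C _ HE; exists C; split => //; exact: E_refl.
have Hrow : Div n (rw k.+1) [:: Sg k.+2] [:: Sg k.+2; Sg k.+1] (rw k ++ [:: Sg k.+1; Sg k.+2]).
  rewrite rwS; apply: Div_cat_l (Div_far (far_cf (allS_rw k) _)) _; first lia.
  apply: Div_letter => /=.
  - have -> : (k.+1 == k.+2) = false by apply/eqP; lia.
    by rewrite /adj eqxx.
  - have -> : (k.+2 == k.+1) = false by apply/eqP; lia.
    by rewrite /adj eqxx orbT.
have H2 : Div n (delta k.+1) ([:: Sg k.+2] ++ [:: Sg k.+1]) ([:: Sg k.+2] ++ sw k.+1) v.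
  apply: Div_cat_r IH.
  by apply: Div_far; apply: far_cf (allS_delta k) _.
exists ((rw k ++ [:: Sg k.+1; Sg k.+2]) ++ v).
rewrite deltaS swS; exact: Div_cat_l Hrow H2.
Qed.
Lemma comm_word n l w : (forall x, x \in w -> sb_equiv n [:: l; x] [:: x; l]) ->
  sb_equiv n (l :: w) (w ++ [:: l]).
Proof.
elim: w => [|x w IH] H /=; first exact: E_refl.
apply: eqv_trans (eqv_catr w (H x (mem_head _ _))) _ => /=.
apply: eqv_cons; apply: IH => y hy; apply: H; rewrite inE hy orbT //.
Qed.

Lemma comm_SS n a b : valid_idx n a -> valid_idx n b -> 1 < ndist a b ->
  sb_equiv n [:: Sg a; Sg b] [:: Sg b; Sg a].
Proof. by move=> *; apply: rel_eqv; apply: R_ss. Qed.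

Lemma rec2 n m : m.+2 <= n -> sb_equiv n (delta m.+2) (delta m.+1 ++ sw m.+1).
Proof.
elim: m => [|m IH] Hm; first exact: E_refl.
rewrite deltaS.
apply: eqv_trans (eqv_catl _ (IH (ltnW Hm))) _.
rewrite rwS -catA.
have C : sb_equiv n (Sg m.+2 :: delta m.+1 ++ sw m.+1) ((delta m.+1 ++ [:: Sg m.+2]) ++ sw m.+1).
  apply: (eqv_catr (sw m.+1) (comm_word _)) => x Hx.
  have /allP A := allS_delta m; have := A x Hx; case: x Hx => // j Hx Hj.
  apply: comm_SS; rewrite /valid_idx /ndist; lia.
apply: eqv_trans (eqv_catl _ C) _.
rewrite deltaS (swS m.+1) -!catA; exact: E_refl.
Qed.

Lemma left_thm n W (hW : positive_word n W) (A : nat -> seq letter)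
  (H : forall i, 1 <= i <= n.-1 -> positive_word n (A i) /\ sb_equiv n W (Sg i :: A i)) :
  forall k, k < n -> exists Z, sb_equiv n W (delta k.+1 ++ Z).
Proof.
elim=> [|k IH] Hk; first by exists W; exact: E_refl.
have [Z HZ] := IH (ltnW Hk).
have [_ HA] := H k.+1 (ltac:(lia)).
have [v Dv] := Div_delta n k.
have HP : positive_word n (delta k.+1 ++ Z) by rewrite -(eqv_pos HZ).
have [D [D1 _]] := Dv Z (A k.+1) HP (eqv_trans (eqv_sym HZ) HA).
exists D; apply: eqv_trans HZ _; apply: eqv_trans (eqv_catl _ D1) _.
rewrite catA; apply: eqv_catr; apply: eqv_sym; exact: rec2.
Qed.

Lemma left_main n W (hn : 2 <= n) (hW : positive_word n W) (A : nat -> seq letter)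
  (H : forall i, 1 <= i <= n.-1 -> positive_word n (A i) /\ sb_equiv n W (Sg i :: A i)) :
  exists Z, positive_word n Z /\ sb_equiv n W (delta n ++ Z).
Proof.
have [Z HZ] := left_thm hW H (k:=n.-1) (ltac:(lia)).
have E : n.-1.+1 = n by lia.
rewrite E in HZ; exists Z; split => //.
by move: hW; rewrite (eqv_pos HZ) pos_cat => /andP [].
Qed.
Lemma ndist_sym i j : ndist i j = ndist j i.
Proof. by rewrite /ndist addnC. Qed.

Lemma rel_rev n u v : sb_rel n u v -> sb_equiv n (rev u) (rev v).
Proof.
case=> [i j hi hj H|i j hi hj H|i j hi hj H|i hi hj|i hi hj|i hi hj]; rewrite /rev /=.
- by apply: rel_eqv; apply: R_ss; rewrite // ndist_sym.
- by apply: rel_eqv; apply: R_xx; rewrite // ndist_sym.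
- by apply: eqv_sym; apply: rel_eqv; apply: R_xs.
- by apply: rel_eqv; apply: R_braid.
- by apply: eqv_sym; apply: rel_eqv; apply: R_mix2.
- by apply: eqv_sym; apply: rel_eqv; apply: R_mix1.
Qed.

Lemma eqv_rev n u v : sb_equiv n u v -> sb_equiv n (rev u) (rev v).
Proof.
elim=> [w|p u' v' s r|w1 w2 _ IH|w1 w2 w3 _ IH1 _ IH2].
- exact: E_refl.
- by rewrite !rev_cat -!catA; apply: eqv_ctx; apply: rel_rev.
- exact: E_sym.
- exact: E_trans IH2.
Qed.

Lemma rev_delta n m : m.+1 <= n -> sb_equiv n (rev (delta m.+1)) (delta m.+1).
Proof.
elim: m => [|m IH] Hm; first exact: E_refl.
rewrite {1}deltaS rev_cat.
have -> : rev (rw m.+1) = sw m.+1 by rewrite /rw /sw map_rev.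
apply: eqv_trans (eqv_catr _ (IH (ltnW Hm))) _.
apply: eqv_sym; exact: (rec2 (m:=m)).
Qed.

Definition setidx (l : letter) (k : nat) : letter :=
  match l with Sg _ => Sg k | X _ => X k end.

Lemma setidx_idx l k : letter_idx (setidx l k) = k.
Proof. by case: l. Qed.
Lemma setidx_setidx l k k' : setidx (setidx l k) k' = setidx l k'.
Proof. by case: l. Qed.
Lemma setidx_self l : setidx l (letter_idx l) = l.
Proof. by case: l. Qed.

Lemma comm_pair n l a : valid_idx n (letter_idx l) -> valid_idx n a -> 1 < ndist (letter_idx l) a ->
  sb_equiv n [:: l; Sg a] [:: Sg a; l].
Proof.
case: l => j /= hj ha H; apply: rel_eqv; first exact: R_ss.
by apply: R_xs => //; apply/eqP => E; rewrite E in H.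
Qed.

Lemma comm_low n l w m : allS m w -> m.+1 < letter_idx l -> letter_idx l < n ->
  sb_equiv n (l :: w) (w ++ [:: l]).
Proof.
move=> /allP A H1 H2; apply: comm_word => x /A; case: x => // a Ha.
apply: comm_pair; rewrite /valid_idx /ndist; lia.
Qed.


Lemma tri1 n l k : letter_idx l = k.+2 -> valid_idx n k.+1 -> valid_idx n k.+2 ->
  sb_equiv n [:: l; Sg k.+1; Sg k.+2] [:: Sg k.+1; Sg k.+2; setidx l k.+1].
Proof.
case: l => j /= -> h1 h2; apply: eqv_sym; apply: rel_eqv.
- exact: R_braid.
- exact: R_mix1.
Qed.

Lemma tri2 n l k : letter_idx l = k.+1 -> valid_idx n k.+1 -> valid_idx n k.+2 ->
  sb_equiv n [:: l; Sg k.+2; Sg k.+1] [:: Sg k.+2; Sg k.+1; setidx l k.+2].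
Proof.
case: l => j /= -> h1 h2.
- apply: rel_eqv; exact: R_braid.
- apply: eqv_sym; apply: rel_eqv; exact: R_mix2.
Qed.

Lemma RS1 n l k M : letter_idx l = k.+2 -> k.+2 <= M -> M < n ->
  sb_equiv n (l :: rw M) (rw M ++ [:: setidx l k.+1]).
Proof.
move=> Hl; elim: M => [|M IH] H2 H3; first lia.
case: (ltngtP k.+2 M.+1) => [Hlt|Hgt|Heq].
- rewrite rwS; apply: eqv_trans (eqv_catr _ (IH _ (ltnW H3))) _; first lia.
  rewrite -!catA; apply: eqv_catl => /=.
  apply: comm_pair; rewrite ?setidx_idx /valid_idx /ndist; lia.
- lia.
- case: Heq => <-; rewrite rwS rwS -!catA.
  have C := comm_low (allS_rw k) (l:=l) (n:=n) (ltac:(lia)) (ltac:(lia)).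
  apply: eqv_trans (eqv_catr [:: Sg k.+1; Sg k.+2] C) _; rewrite -!catA.
  apply: eqv_catl; apply: tri1 => //; rewrite /valid_idx; lia.
Qed.

Lemma RS2 n l k M : letter_idx l = k.+1 -> k.+2 <= M -> M < n ->
  sb_equiv n (l :: sw M) (sw M ++ [:: setidx l k.+2]).
Proof.
move=> Hl; elim: M => [|M IH] H2 H3; first lia.
case: (ltngtP k.+2 M.+1) => [Hlt|Hgt|Heq].
- rewrite swS; apply: eqv_trans (eqv_catr (sw M) (comm_pair (l:=l) (a:=M.+1) _ _ _)) _;
    rewrite ?/valid_idx ?/ndist; try lia.
  rewrite /=; apply: eqv_cons; apply: IH; lia.
- lia.
- case: Heq => <-; rewrite swS swS.
  apply: eqv_trans (eqv_catr (sw k) (tri2 Hl _ _)) _; rewrite ?/valid_idx; try lia.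
  rewrite /=; do 2 apply: eqv_cons.
  apply: (comm_low (allS_sw k)); rewrite setidx_idx; lia.
Qed.

Lemma Qm n k : k.+2 <= n -> forall l, 1 <= letter_idx l -> letter_idx l < k.+2 ->
  sb_equiv n (l :: delta k.+2) (delta k.+2 ++ [:: setidx l (k.+2 - letter_idx l)]).
Proof.
elim: k => [|k IH] Hn l H1 H2.
  case: l H1 H2 => j /= H1 H2; have -> : j = 1 by lia.
    exact: E_refl.
  apply: rel_eqv; apply: R_xs; rewrite /valid_idx /ndist; lia.
case: (ltngtP (letter_idx l) 1) => [|Hgt|Heq]; first lia.
- have [i Ej] : exists i, letter_idx l = i.+2 by exists (letter_idx l).-2; lia.
  rewrite Ej deltaS.
  have R1 := RS1 (n:=n) (M:=k.+2) Ej (ltac:(lia)) (ltac:(lia)).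
  rewrite -cat_cons; apply: eqv_trans (eqv_catr (delta k.+2) R1) _.
  rewrite -!catA; apply: eqv_catl.
  apply: eqv_trans (IH (ltnW Hn) _ _ _) _; rewrite ?setidx_idx; try lia.
  rewrite setidx_setidx.
  have -> : k.+2 - i.+1 = k.+3 - i.+2 by lia.
  exact: E_refl.
- rewrite Heq.
  apply: eqv_trans (eqv_cons _ (rec2 (m:=k.+1) Hn)) _.
  have IH1 := IH (ltnW Hn) l H1 (ltac:(lia)).
  rewrite Heq in IH1.
  apply: eqv_trans (eqv_catr (sw k.+2) IH1) _.
  rewrite -catA; apply: eqv_trans (eqv_catl _ (RS2 (l:=setidx l (k.+2 - 1)) (k:=k) _ _ _)) _;
    rewrite ?setidx_idx; try lia.
  rewrite catA setidx_setidx; apply: eqv_catr; apply: eqv_sym.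
  exact: rec2.
Qed.
Definition tau n (l : letter) : letter := setidx l (n - letter_idx l).

Lemma qc_word n Y : 2 <= n -> positive_word n Y ->
  sb_equiv n (Y ++ delta n) (delta n ++ map (tau n) Y).
Proof.
move=> Hn; have [k Ek] : exists k, n = k.+2 by exists n.-2; lia.
elim: Y => [|l Y IH] HY; first by rewrite cats0; exact: E_refl.
move: HY; rewrite pos_cons => /andP [vl HY].
rewrite cat_cons; apply: eqv_trans (eqv_cons _ (IH HY)) _.
rewrite -cat_cons Ek.
have Q := Qm (n:=n) (k:=k) (ltac:(lia)) (l:=l).
rewrite Ek in vl Q.
have {Q} Q := Q (ltac:(move: vl; rewrite /valid_idx; lia)) (ltac:(move: vl; rewrite /valid_idx; lia)).
apply: eqv_trans (eqv_catr _ Q) _; rewrite -catA; exact: E_refl.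
Qed.

Lemma tau_pos n Y : positive_word n Y -> positive_word n (map (tau n) Y).
Proof.
move=> /allP H; apply/allP => x /mapP [l /H Hl ->].
by rewrite /tau setidx_idx; move: Hl; rewrite /valid_idx; lia.
Qed.

Lemma pos_rev n Y : positive_word n (rev Y) = positive_word n Y.
Proof. exact: all_rev. Qed.

Theorem proposition2p4 (n : nat) (hn : 2 <= n) (W : seq letter)
    (hW : positive_word n W) :
  ((exists A : nat -> seq letter, forall i, 1 <= i <= n.-1 ->
       positive_word n (A i) /\ sb_equiv n W (Sg i :: A i))
   \/
   (exists B : nat -> seq letter, forall i, 1 <= i <= n.-1 ->
       positive_word n (B i) /\ sb_equiv n W (rcons (B i) (Sg i)))) ->
  exists Z : seq letter, positive_word n Z /\ sb_equiv n W (delta n ++ Z).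
Proof.
case=> [[A HA]|[B HB]]; first exact: (left_main hn hW HA).
have hW' : positive_word n (rev W) by rewrite pos_rev.
have HA : forall i, 1 <= i <= n.-1 ->
    positive_word n (rev (B i)) /\ sb_equiv n (rev W) (Sg i :: rev (B i)).
  move=> i Hi; have [h1 h2] := HB i Hi; split; first by rewrite pos_rev.
  by rewrite -rev_rcons; apply: eqv_rev.
have [Z [HZ E]] := left_main hn hW' HA.
exists (map (tau n) (rev Z)); split; first by apply: tau_pos; rewrite pos_rev.
have E2 := eqv_rev E; rewrite revK rev_cat in E2.
apply: eqv_trans E2 _.
have Hd : n.-1.+1 <= n by lia.
have Rd := rev_delta Hd.
have E3 : n.-1.+1 = n by lia.
rewrite E3 in Rd.
apply: eqv_trans (eqv_catl _ Rd) _.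
by apply: qc_word; rewrite ?pos_rev.
Qed.
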